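(* $\mathrm{FO}(\perp\!\!\!\perp)\not\le\mathrm{ESO}_{\mathbb R}[\le,+,0,1]$; that is, there is a formula $\phi\in\mathrm{FO}(\perp\!\!\!\perp)$ (for instance $\phi(x)=\exists c\,\exists y\,\forall z\,(\mathrm{dep}(c)\wedge x\perp\!\!\!\perp y\wedge x\approx y\wedge((x=c\wedge y=c)\leftrightarrow z=c))$, where $\mathrm{dep}(c)$ and $x\approx y$ are expressible in $\mathrm{FO}(\perp\!\!\!\perp)$) such that no formula $\psi$ of $\mathrm{ESO}_{\mathbb R}[\le,+,0,1]$ satisfies $\mathrm{Struc}_{d[0,1]}(\phi)=\mathrm{Struc}_{d[0,1]}(\psi)$.
   Context: Conventions on structures and $\mathrm{ESO}_{\mathbb R}$. Let $\tau$ be a finite relational vocabulary and $\sigma$ a finite functional vocabulary. An $\mathbb R$-structure of vocabulary $\tau\cup\sigma$ is a tuple $\mathfrak A=(A,\mathbb R,(R^{\mathfrak A})_{R\in\tau},(g^{\mathfrak A})_{g\in\sigma})$ where $A$ is a finite set with at least two elements, each $R^{\mathfrak A}\subseteq A^{\mathrm{ar}(R)}$ and each $g^{\mathfrak A}\colon A^{\mathrm{ar}(g)}\to\mathbb R$. $\mathfrak A$ is a $d[0,1]$-structure if every $g^{\mathfrak A}$ is a probability distribution on $A^{\mathrm{ar}(g)}$. Numerical terms are built by $i::=c\mid f(\vec x)\mid i+i\mid i\times i\mid \mathrm{SUM}_{\vec y}\,i$, where $c\in\mathbb R$ is a constant, $f$ is a function symbol or function variable, and $\vec x,\vec y$ are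 tuples of first-order variables, with the usual real interpretation. For $O\subseteq\{+,\times,\mathrm{SUM}\}$, $E\subseteq\{=,<,\le\}$, $C\subseteq\mathbb R$, the formulae of $\mathrm{ESO}_{\mathbb R}[O,E,C]$ are given by $\phi::= x=y\mid\neg x=y\mid i\,e\,j\mid\neg\, i\,e\,j\mid R(\vec x)\mid\neg R(\vec x)\mid\phi\wedge\phi\mid\phi\vee\phi\mid\exists x\phi\mid\forall x\phi\mid\exists f\phi$, where $i,j$ are numerical terms using only operations in $O$ and constants in $C$, $e\in E$, $R\in\tau$, and $f$ is a function variable; first-order variables range over $A$ and $\exists f$ ranges over all functions $A^{\mathrm{ar}(f)}\to\mathbb R$. $\mathrm{ESO}_{\mathbb R}[\le,+,0,1]$ means $O=\{+\}$, $E=\{\le\}$, $C=\{0,1\}$. Teams and probabilistic team semantics. A probabilistic team is a function $\mathbb X\colon X\to[0,1]$ with $\sum_{s\in X}\mathbb X(s)=1$, $X$ a finite set of assignments from a finite variable set into a finite set $A$. Write $\mathrm{supp}(\mathbb X)=\{s:\mathbb X(s)>0\}$, $|\mathbb X|=\sum_s\mathbb X(s)$, $\mathbb X_\alpha$ for the restriction to assignments satisfying first-order $\alpha$. The marginal of $\mathbb X$ on $V$ is $s\mapsto\sum_{t\upharpoonright V=s}\mathbb X(t)$; $\mathbb X[A/x]$ is the team on assignments $s$ over $\mathrm{Dom}(\mathbb X)\cup\{x\}$ with $s(x)\in A$, given by $s\mapsto\mathbb X'(s\upharpoonright(\mathrm{Dom}(\mathbb X)\setminus\{x\}))/|A|$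 with $\mathbb X'$ the marginal on $\mathrm{Dom}(\mathbb X)\setminus\{x\}$. Formulae are in negation normal form; $\alpha\leftrightarrow\beta$ for first-order $\alpha,\beta$ abbreviates $(\alpha\wedge\beta)\vee(\alpha^\bot\wedge\beta^\bot)$ with $\alpha^\bot$ the negation normal form of $\neg\alpha$. Clauses: literals hold iff they hold for every $s\in\mathrm{supp}(\mathbb X)$; $\wedge$ componentwise; $\psi\vee\theta$ iff $\mathbb X=\alpha\mathbb Y+(1-\alpha)\mathbb Z$ for probabilistic teams $\mathbb Y\models\psi$, $\mathbb Z\models\theta$, $\alpha\in[0,1]$; $\forall x\psi$ iff $\mathbb X[A/x]\models\psi$; $\exists x\psi$ iff some probabilistic team over $\mathrm{Dom}(\mathbb X)\cup\{x\}$ with the same marginal on $\mathrm{Dom}(\mathbb X)\setminus\{x\}$ as $\mathbb X$ satisfies $\psi$. Atoms: $\vec x\approx\vec y$ iff $|\mathbb X_{\vec x=\vec a}|=|\mathbb X_{\vec y=\vec a}|$ for all $\vec a$; $\mathrm{dep}(c)$ iff $c$ is constant on $\mathrm{supp}(\mathbb X)$; $\vec y\perp\!\!\!\perp\vec z$ iff $|\mathbb X_{\vec y=\vec b}|\cdot|\mathbb X_{\vec z=\vec c}|=|\mathbb X_{\vec y\vec z=\vec b\vec c}|\cdot|\mathbb X|$ for all $\vec b,\vec c$. $\mathrm{FO}(\perp\!\!\!\perp)$ is first-order logic extended with marginal independence atoms. Comparing team logics with ESO. For a probabilistic team $\mathbb X$ with variable domain $\{x_1,\dots,x_n\}$ and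 values in $A$, $f_{\mathbb X}\colon A^n\to[0,1]$ is given by $f_{\mathbb X}(s(x_1),\dots,s(x_n))=\mathbb X(s)$ for $s$ in the team and $0$ elsewhere. For $\phi\in\mathrm{FO}(\mathcal C)$ of vocabulary $\tau$ with free variables $x_1,\dots,x_n$, $\mathrm{Struc}_{d[0,1]}(\phi)$ is the class of $d[0,1]$-structures $\mathfrak A$ of vocabulary $\tau\cup\{f\}$ ($f$ $n$-ary) such that the $\tau$-reduct of $\mathfrak A$ satisfies $\phi$ under the probabilistic team $\mathbb X$ with $f_{\mathbb X}=f^{\mathfrak A}$. For an ESO-type formula with one free $n$-ary function variable $f$ and no free first-order variables, $\mathrm{Struc}_{d[0,1]}$ is the class of $d[0,1]$-structures of vocabulary $\tau\cup\{f\}$ satisfying it. For logics $\mathcal L,\mathcal L'$, $\mathcal L\le\mathcal L'$ means every $\phi\in\mathcal L$ has some $\phi'\in\mathcal L'$ with $\mathrm{Struc}_{d[0,1]}(\phi)=\mathrm{Struc}_{d[0,1]}(\phi')$. *)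

(* Defs.v *)
From HB Require Import structures.
From mathcomp Require Import all_boot all_order all_algebra.
From mathcomp Require Import Rstruct.
Notation R := Rdefinitions.R.
Set Implicit Arguments. Unset Strict Implicit. Unset Printing Implicit Defensive.
Import Order.TTheory GRing.Theory Num.Theory.
Local Open Scope ring_scope.

(* A finite relational vocabulary tau: relation symbol r (r < size tau)
   has arity nth 0 tau r. *)
Definition vocab := seq nat.
Definition rel_ok (tau : vocab) (r k : nat) : bool :=
  (r < size tau)%N && (nth 0%N tau r == k).

(* A structure is given by a finite universe A (with 1 < #|A|), an
   interpretation rels of the relation symbols (rels r is the relation
   R_r^A, a predicate on tuples, only meaningful for r < size tau on
   tuples of length ar(R_r)) and the interpretation fA : A^n -> R of the
   single n-ary function symbol f. *)
Definition d01 (A : finType) (n : nat) (fA : n.-tuple A -> R) : Prop :=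
  (forall t, 0 <= fA t) /\ \sum_t fA t = 1.

Inductive foi (N : nat) : Type :=
  | FEq of 'I_N & 'I_N
  | FNeq of 'I_N & 'I_N
  | FRel of nat & seq 'I_N
  | FNRel of nat & seq 'I_N
  | FInd of seq 'I_N & seq 'I_N          (* marginal independence  y _||_ z *)
  | FAnd of foi N & foi N
  | FOr of foi N & foi N
  | FEx of 'I_N & foi N
  | FAll of 'I_N & foi N.

Fixpoint wf_fo N (tau : vocab) (phi : foi N) : bool :=
  match phi with
  | FRel r xs | FNRel r xs => rel_ok tau r (size xs)
  | FAnd p q | FOr p q => wf_fo tau p && wf_fo tau q
  | FEx _ p | FAll _ p => wf_fo tau p
  | _ => true
  end.

Fixpoint fv N (phi : foi N) : {set 'I_N} :=
  match phi with
  | FEq x y | FNeq x y => [set x; y]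
  | FRel _ xs | FNRel _ xs => [set v in xs]
  | FInd ys zs => [set v in ys ++ zs]
  | FAnd p q | FOr p q => fv p :|: fv q
  | FEx x p | FAll x p => fv p :\ x
  end.

Definition fvs N (phi : foi N) : seq 'I_N := [seq v <- enum 'I_N | v \in fv phi].

(* An assignment with variable domain D is a finite function
   'I_N -> option A, defined (Some) exactly on D. *)
Definition asg (N : nat) (A : finType) := {ffun 'I_N -> option A}.
Definition team (N : nat) (A : finType) := asg N A -> R.

Definition dom_ok N (A : finType) (D : {set 'I_N}) (s : asg N A) : bool :=
  [forall v, (s v != None) == (v \in D)].

Definition pteam N (A : finType) (D : {set 'I_N}) (X : team N A) : Prop :=
  (forall s, 0 <= X s) /\ (forall s, X s != 0 -> dom_ok D s) /\ \sum_(s : asg N A) X s = 1.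

Definition mass N (A : finType) (X : team N A) (P : pred (asg N A)) : R :=
  \sum_(s : asg N A | P s) X s.

Definition marg N (A : finType) (V : {set 'I_N}) (X : team N A) (s : asg N A) : R :=
  \sum_(t : asg N A | [forall v in V, t v == s v]) X t.

Definition vals N (A : finType) (s : asg N A) (xs : seq 'I_N) : seq (option A) :=
  [seq s v | v <- xs].

Definition team_univ N (A : finType) (D : {set 'I_N}) (x : 'I_N) (X : team N A) : team N A :=
  fun s => if dom_ok (x |: D) s then marg (D :\ x) X s / #|A|%:R else 0.

(* Probabilistic team semantics: D is the variable domain of X. *)
Fixpoint fsat N (A : finType) (rels : nat -> seq A -> bool)
    (D : {set 'I_N}) (X : team N A) (phi : foi N) {struct phi} : Prop :=
  match phi with
  | FEq x y => forall s, X s != 0 -> s x = s y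
  | FNeq x y => forall s, X s != 0 -> s x <> s y
  | FRel r xs => forall s, X s != 0 -> rels r (pmap (fun v => s v) xs)
  | FNRel r xs => forall s, X s != 0 -> ~~ rels r (pmap (fun v => s v) xs)
  | FInd ys zs =>
      forall b c : seq A, size b = size ys -> size c = size zs ->
        mass X (fun s => vals s ys == map Some b) * mass X (fun s => vals s zs == map Some c)
        = mass X (fun s => vals s (ys ++ zs) == map Some (b ++ c)) * mass X predT
  | FAnd p q => fsat rels D X p /\ fsat rels D X q
  | FOr p q =>
      exists (a : R) (Y Z : team N A),
        [/\ 0 <= a <= 1, pteam D Y, pteam D Z,
            (forall s, X s = a * Y s + (1 - a) * Z s)
          & fsat rels D Y p /\ fsat rels D Z q]
  | FEx x p =>
      exists Y : team N A,
        [/\ pteam (x |: D) Y,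
            (forall s, marg (D :\ x) Y s = marg (D :\ x) X s)
          & fsat rels (x |: D) Y p]
  | FAll x p => fsat rels (x |: D) (team_univ D x X) p
  end.

Definition team_of N (A : finType) (xs : seq 'I_N) (fA : (size xs).-tuple A -> R) : team N A :=
  fun s => \sum_(t : (size xs).-tuple A |
                   (vals s xs == map Some (tval t)) && dom_ok [set v in xs] s) fA t.

(* Struc_{d[0,1]}(phi) membership (the d[0,1] condition is imposed separately) *)
Definition struc_fo N (A : finType) (rels : nat -> seq A -> bool) (phi : foi N)
    (fA : (size (fvs phi)).-tuple A -> R) : Prop :=
  fsat rels [set v in fvs phi] (team_of fA) phi.
Arguments struc_fo {N A} rels phi fA.

(* first-order variables and function variables are named by nat;      *)
(* the free function variable f of Struc is function variable 0.       *)

Inductive nop := OAdd | OMul | OSum.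
Inductive cmp := CEq | CLt | CLe.

Inductive eterm : Type :=
  | TConst of R
  | TApp of nat & seq nat
  | TAdd of eterm & eterm
  | TMul of eterm & eterm
  | TSum of seq nat & eterm.

Inductive eso : Type :=
  | EEq of nat & nat
  | ENeq of nat & nat
  | ECmp of cmp & eterm & eterm
  | ENCmp of cmp & eterm & eterm
  | ERel of nat & seq nat
  | ENRel of nat & seq nat
  | EAnd of eso & eso
  | EOr of eso & eso
  | EEx of nat & eso
  | EAll of nat & eso
  | EExF of nat & nat & eso.            (* EExF g k psi : exists k-ary g, psi *)

Fixpoint term_in (O : nop -> Prop) (C : R -> Prop) (t : eterm) : Prop :=
  match t with
  | TConst c => C c
  | TApp _ _ => True
  | TAdd i j => O OAdd /\ term_in O C i /\ term_in O C j
  | TMul i j => O OMul /\ term_in O C i /\ term_in O C j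
  | TSum _ i => O OSum /\ term_in O C i
  end.

Fixpoint eso_in (O : nop -> Prop) (E : cmp -> Prop) (C : R -> Prop) (psi : eso) : Prop :=
  match psi with
  | ECmp e i j | ENCmp e i j => E e /\ term_in O C i /\ term_in O C j
  | EAnd p q | EOr p q => eso_in O E C p /\ eso_in O E C q
  | EEx _ p | EAll _ p | EExF _ _ p => eso_in O E C p
  | _ => True
  end.

Definition ESO_le_plus_01 (psi : eso) : Prop :=
  eso_in (fun o => o = OAdd) (fun e => e = CLe) (fun c => c = 0 \/ c = 1) psi.

(* well-formedness: bv = bound first-order variables, fa = arities of the
   function variables in scope *)
Fixpoint wf_term (bv : seq nat) (fa : nat -> option nat) (t : eterm) : bool :=
  match t with
  | TConst _ => true
  | TApp g xs => all (fun v => v \in bv) xs && (fa g == Some (size xs))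
  | TAdd i j | TMul i j => wf_term bv fa i && wf_term bv fa j
  | TSum ys i => wf_term (ys ++ bv) fa i
  end.

Fixpoint wf_eso_rec (tau : vocab) (bv : seq nat) (fa : nat -> option nat) (psi : eso) : bool :=
  match psi with
  | EEq x y | ENeq x y => (x \in bv) && (y \in bv)
  | ECmp _ i j | ENCmp _ i j => wf_term bv fa i && wf_term bv fa j
  | ERel r xs | ENRel r xs => all (fun v => v \in bv) xs && rel_ok tau r (size xs)
  | EAnd p q | EOr p q => wf_eso_rec tau bv fa p && wf_eso_rec tau bv fa q
  | EEx x p | EAll x p => wf_eso_rec tau (x :: bv) fa p
  | EExF g k p => wf_eso_rec tau bv (fun h => if h == g then Some k else fa h) p
  end.

(* psi is an ESO formula of vocabulary tau with the single free n-ary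
   function variable f (= function variable 0) and no free first-order
   variables *)
Definition wf_eso (tau : vocab) (n : nat) (psi : eso) : bool :=
  wf_eso_rec tau [::] (fun h => if h == 0%N then Some n else None) psi.

Definition cmp_eval (e : cmp) (a b : R) : Prop :=
  match e with CEq => a = b | CLt => a < b | CLe => a <= b end.

Definition upd1 (A : Type) (s : nat -> A) (x : nat) (a : A) : nat -> A :=
  fun v => if v == x then a else s v.

Definition upds (A : Type) (s : nat -> A) (ys : seq nat) (a : seq A) : nat -> A :=
  fun v => if v \in ys then nth (s v) a (index v ys) else s v.

Fixpoint teval (A : finType) (s : nat -> A) (F : nat -> seq A -> R) (t : eterm) : R :=
  match t with
  | TConst c => c
  | TApp g xs => F g [seq s v | v <- xs]
  | TAdd i j => teval s F i + teval s F j
  | TMul i j => teval s F i * teval s F j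
  | TSum ys i => \sum_(a : (size ys).-tuple A) teval (upds s ys (tval a)) F i
  end.

Fixpoint esat (A : finType) (rels : nat -> seq A -> bool)
    (s : nat -> A) (F : nat -> seq A -> R) (psi : eso) {struct psi} : Prop :=
  match psi with
  | EEq x y => s x = s y
  | ENeq x y => s x <> s y
  | ECmp e i j => cmp_eval e (teval s F i) (teval s F j)
  | ENCmp e i j => ~ cmp_eval e (teval s F i) (teval s F j)
  | ERel r xs => rels r [seq s v | v <- xs]
  | ENRel r xs => ~~ rels r [seq s v | v <- xs]
  | EAnd p q => esat rels s F p /\ esat rels s F q
  | EOr p q => esat rels s F p \/ esat rels s F q
  | EEx x p => exists a : A, esat rels (upd1 s x a) F p
  | EAll x p => forall a : A, esat rels (upd1 s x a) F p
  | EExF g _ p => exists h : seq A -> R, esat rels s (upd1 F g h) p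
  end.

Definition fenv0 (A : finType) (n : nat) (fA : n.-tuple A -> R) : nat -> seq A -> R :=
  fun g a => if g == 0%N then oapp fA 0 (insub a : option (n.-tuple A)) else 0.

(* Struc_{d[0,1]}(psi) membership; psi has no free first-order variables,
   so the initial first-order assignment s is irrelevant. *)
Definition struc_eso (A : finType) (n : nat) (rels : nat -> seq A -> bool)
    (fA : n.-tuple A -> R) (psi : eso) : Prop :=
  forall s : nat -> A, esat rels s (fenv0 fA) psi.

(* Main.v *)
Require Import Defs.
From HB Require Import structures.
From mathcomp Require Import all_boot all_order all_algebra.
From mathcomp Require Import Rstruct.
From mathcomp Require Import ring lra zify.
From Stdlib Require Import ClassicalEpsilon Classical FunctionalExtensionality.
Import Order.TTheory GRing.Theory Num.Theory.
Local Open Scope ring_scope.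
Set Implicit Arguments. Unset Strict Implicit.

Lemma nat_no_sqrt2 (a b : nat) : (0 < b)%N -> (a * a)%N <> (2 * (b * b))%N.
Proof.
move=> b0 E.
have a0 : (0 < a)%N.
  case: a E => [|a] //=; rewrite muln0 => /esym/eqP; rewrite muln_eq0 /=. lia.
have := congr1 (logn 2) E.
rewrite lognM // ?muln_gt0 ?a0 ?b0 // lognM ?muln_gt0 ?b0 //.
rewrite lognM ?b0 //.
rewrite (logn_prime 2 (isT : prime 2)) eqxx. lia.
Qed.

Lemma rat_no_sqrt2 (q : rat) : q * q <> 2.
Proof.
move=> E.
have d0 := denq_gt0 q.
have : (numq q * numq q = 2 * (denq q * denq q))%R.
  apply: (@intr_inj rat); rewrite !rmorphM /=.
  have qE := divq_num_den q.
  have dn : (denq q)%:~R != 0 :> rat by rewrite intr_eq0 gt_eqF.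
  have nE : (numq q)%:~R = q * (denq q)%:~R :> rat.
    by rewrite -{2}qE mulfVK.
  by rewrite nE mulrACA E.
move/(congr1 absz). rewrite !abszM /=.
apply: nat_no_sqrt2. by rewrite absz_gt0 gt_eqF.
Qed.

Record Inv (S : R -> Prop) (lam : R -> R) : Prop := {
 S1 : S 1;
 SD : forall x y, S x -> S y -> S (x + y);
 SZ : forall q x, S x -> S (ratr q * x);
 lD : forall x y, S x -> S y -> lam (x + y) = lam x + lam y;
 lZ : forall q x, S x -> lam (ratr q * x) = ratr q * lam x }.

Lemma S0 S lam : Inv S lam -> S 0.
Proof. move=> I; have := SZ I 0 (S1 I); rewrite rmorph0 mul0r; exact. Qed.

Lemma lam0 S lam : Inv S lam -> lam 0 = 0.
Proof. move=> I; have := lZ I 0 (S1 I); rewrite rmorph0 !mul0r; exact. Qed.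

Lemma ratr_inj : injective (@ratr R).
Proof. exact: fmorph_inj. Qed.

Lemma extend S lam v c : Inv S lam -> ~ S v ->
  exists S' lam', Inv S' lam' /\ (forall x, S x -> S' x /\ lam' x = lam x)
     /\ S' v /\ lam' v = c.
Proof.
move=> I nSv.
have uniq : forall w1 w2 q1 q2, S w1 -> S w2 -> w1 + ratr q1 * v = w2 + ratr q2 * v ->
    w1 = w2 /\ q1 = q2.
  move=> w1 w2 q1 q2 h1 h2 E.
  case: (boolP (q1 == q2)) => [/eqP e|ne]; first subst q2.
    split => //; have := congr1 (fun z => z - ratr q1 * v) E; rewrite /= !addrK; exact.
  exfalso; apply: nSv.
  have dn : ratr q2 - ratr q1 != 0 :> R.
    by rewrite subr_eq0; apply/eqP => /ratr_inj/esym/eqP; rewrite (negbTE ne).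
  have -> : v = ratr ((q2 - q1)^-1) * (w1 + ratr (-1) * w2).
    rewrite fmorphV rmorphB rmorphN rmorph1 /=.
    apply: (mulfI dn). rewrite mulrA mulfV // mul1r mulrBl. lra.
  exact: (SZ I ((q2-q1)^-1) (SD I h1 (SZ I (-1) h2))).
pose P x (p : R * rat) := S p.1 /\ x = p.1 + ratr p.2 * v.
pose pick x := epsilon (inhabits (0 : R, 0 : rat)) (P x).
have pickE : forall w q, S w -> pick (w + ratr q * v) = (w, q).
  move=> w q hw.
  have : P (w + ratr q * v) (pick (w + ratr q * v)).
    by apply: epsilon_spec; exists (w, q).
  case: (pick _) => w' q' [/= hw' E].
  by case: (uniq _ _ _ _ hw hw' E) => -> ->.
pose lam' x := lam (pick x).1 + ratr (pick x).2 * c.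
have key : forall w q, S w -> lam' (w + ratr q * v) = lam w + ratr q * c.
  by move=> w q hw; rewrite /lam' pickE.
exists (fun x => exists w q, S w /\ x = w + ratr q * v), lam'.
have S0' := S0 I.
split; [|split; [|split]].
- split.
  + by exists 1, 0; split; [exact: S1 I| rewrite rmorph0 mul0r addr0].
  + move=> _ _ [w1 [q1 [h1 ->]]] [w2 [q2 [h2 ->]]].
    exists (w1 + w2), (q1 + q2); split; first exact: (SD I h1 h2).
    by rewrite rmorphD /=; ring.
  + move=> r _ [w1 [q1 [h1 ->]]].
    exists (ratr r * w1), (r * q1); split; first exact: (SZ I _ h1).
    by rewrite rmorphM /=; ring.
  + move=> _ _ [w1 [q1 [h1 ->]]] [w2 [q2 [h2 ->]]].
    have -> : w1 + ratr q1 * v + (w2 + ratr q2 * v) = (w1 + w2) + ratr (q1 + q2) * v.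
      by rewrite rmorphD /=; ring.
    rewrite !key //; last exact: (SD I h1 h2).
    rewrite (lD I h1 h2) rmorphD /=; ring.
  + move=> r _ [w1 [q1 [h1 ->]]].
    have -> : ratr r * (w1 + ratr q1 * v) = ratr r * w1 + ratr (r * q1) * v.
      by rewrite rmorphM /=; ring.
    rewrite !key //; last exact: (SZ I _ h1).
    rewrite (lZ I _ h1) rmorphM /=; ring.
- move=> x hx; split; first by exists x, 0; rewrite rmorph0 mul0r addr0.
  have := key x 0 hx; rewrite rmorph0 !mul0r !addr0; exact.
- by exists 0, 1; rewrite rmorph1 mul1r add0r.
- have := key 0 1 S0'; rewrite rmorph1 !mul1r add0r (lam0 I) add0r; exact.
Qed.

Lemma extend_list S lam (L : seq R) : Inv S lam ->
  exists S' lam', Inv S' lam' /\ (forall x, S x -> S' x /\ lam' x = lam x)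
     /\ (forall x, x \in L -> S' x).
Proof.
elim: L S lam => [|v L IH] S lam I.
  by exists S, lam; split => //; split => // x; rewrite in_nil.
have [S1' [lam1 [I1 [ag1 hv]]]] : exists S' lam', Inv S' lam' /\
    (forall x, S x -> S' x /\ lam' x = lam x) /\ S' v.
  case: (classic (S v)) => hv; first by exists S, lam.
  have [S' [lam' [I' [ag [hv' _]]]]] := extend 0 I hv.
  by exists S', lam'.
have [S2 [lam2 [I2 [ag2 hL]]]] := IH _ _ I1.
exists S2, lam2; split => //; split.
  move=> x hx; have [h1 e1] := ag1 _ hx; have [h2 e2] := ag2 _ h1.
  by split => //; rewrite e2.
move=> x; rewrite in_cons => /orP[/eqP ->|]; first by case: (ag2 _ hv).
exact: hL.
Qed.

Definition u : R := Num.sqrt 2.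
Lemma u2 : u * u = 2.
Proof. by rewrite -expr2 sqr_sqrtr // ler0n. Qed.
Lemma u_gt0 : 0 < u.
Proof. by rewrite sqrtr_gt0 ltr0n. Qed.


Lemma lam_exists (L : seq R) : exists S lam, Inv S lam /\ lam 1 = 0 /\ S u /\ lam u = 1
  /\ forall x, x \in L -> S x.
Proof.
have I0 : Inv (fun x => exists q, x = ratr q) (fun _ => 0).
  split.
  - by exists 1; rewrite rmorph1.
  - by move=> _ _ [q1 ->] [q2 ->]; exists (q1 + q2); rewrite rmorphD.
  - by move=> r _ [q ->]; exists (r * q); rewrite rmorphM.
  - by move=> *; rewrite addr0.
  - by move=> *; rewrite mulr0.
have nu : ~ (exists q, u = ratr q).
  move=> [q uq]; suff E : q * q = 2 by exact: (rat_no_sqrt2 E). apply: (@ratr_inj).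
  rewrite rmorphM /= -uq u2. by rewrite -[2%R]/(2%:R) rmorph_nat.
have [S1' [lam1 [I1 [ag1 [hu lu]]]]] := extend 1 I0 nu.
have [S2 [lam2 [I2 [ag2 hL]]]] := extend_list L I1.
exists S2, lam2; split => //; split.
  have [_ ->] := ag2 1 (S1 I1). by have [_ ->] := ag1 1 (ex_intro _ 1 (esym (rmorph1 _))).
split; first by case: (ag2 _ hu).
split => //. by have [_ ->] := ag2 _ hu.
Qed.

Definition goodp (f : R -> R) (e : R) (p : R * R) :=
  p.1 < p.2 -> p.1 + e * f p.1 < p.2 + e * f p.2.

Lemma eps_pairs (f : R -> R) (P : seq (R * R)) :
  exists e, 0 < e /\ forall e', 0 < e' <= e -> forall p, p \in P -> goodp f e' p.
Proof.
elim: P => [|[x y] P [e [e0 He]]].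
  by exists 1; split => // e' _ p; rewrite in_nil.
have [e1 [e10 He1]] : exists e1, 0 < e1 /\ forall e', 0 < e' <= e1 -> goodp f e' (x, y).
  case: (ltP x y) => xy; last first.
    by exists 1; split => // e' _; rewrite /goodp /= => h; exfalso; lra.
  pose K := `|f x| + `|f y|.
  have K0 : 0 <= K by rewrite /K addr_ge0.
  have h1 : f x <= `|f x| := ler_norm _.
  have h2 : - f y <= `|f y| by rewrite -normrN ler_norm.
  exists ((y - x) / (2 * (K + 1))).
  have d0 : 0 < 2 * (K + 1) by lra.
  have eE : (y - x) / (2 * (K + 1)) * (2 * (K + 1)) = y - x by rewrite mulfVK // gt_eqF.
  split; first by apply: divr_gt0 => //; lra.
  move=> e' /andP[e'0 e'le] _ /=.
  set d := (y - x) / _ in eE e'le.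
  have : e' * (f x - f y) <= e' * K by apply: ler_wpM2l; [lra| rewrite /K; lra].
  have : e' * K <= d * K by apply: ler_wpM2r.
  nra.
exists (Num.min e e1); split; first by rewrite lt_min e0 e10.
move=> e' /andP[e'0]; rewrite le_min => /andP[h1 h2] p.
rewrite in_cons => /orP[/eqP ->|hp].
  by apply: He1; rewrite e'0 h2.
by apply: He => //; rewrite e'0 h1.
Qed.

Lemma eps_exists (f : R -> R) (L : seq R) :
  exists e, 0 < e /\ forall x y, x \in L -> y \in L -> x < y -> x + e * f x < y + e * f y.
Proof.
have [e [e0 He]] := eps_pairs f [seq (x, y) | x <- L, y <- L].
exists e; split => // x y hx hy.
apply: (He e _ (x, y)); first by rewrite e0 lexx.
by apply/allpairsP; exists (x, y).
Qed.

Definition fO := (fun o => o = OAdd).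
Definition fC := (fun c : R => c = 0 \/ c = 1).

Definition TF (A : Type) (T : R -> R) (F : nat -> seq A -> R) : nat -> seq A -> R :=
  fun g a => T (F g a).

Fixpoint tvals (A : Type) (s : nat -> A) (F : nat -> seq A -> R) (t : eterm) : seq R :=
  match t with
  | TConst _ => [::]
  | TApp g xs => [:: F g [seq s v | v <- xs]]
  | TAdd i j | TMul i j => tvals s F i ++ tvals s F j
  | TSum _ _ => [::]
  end.

Record Hyp (T : R -> R) (G : R -> Prop) (L : seq R) : Prop := {
  hG01 : G 0 /\ G 1;
  hGD : forall x y, G x -> G y -> G (x+y);
  hTD : forall x y, G x -> G y -> T (x+y) = T x + T y;
  hT01 : T 0 = 0 /\ T 1 = 1;
  hGL : forall x, x \in L -> G x;
  hmono : forall x y, x \in L -> y \in L -> x < y -> T x < T y }.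

Lemma Hyp_sub T G L L' : Hyp T G L -> {subset L' <= L} -> Hyp T G L'.
Proof.
case=> h1 h2 h3 h4 h5 h6 sub; split => //.
  by move=> x /sub; apply: h5.
by move=> x y /sub hx /sub hy; apply: h6.
Qed.

Lemma tevalT (A : finType) (s : nat -> A) F t T G L : term_in fO fC t -> Hyp T G L ->
  {subset tvals s F t <= L} -> G (teval s F t) /\ T (teval s F t) = teval s (TF T F) t.
Proof.
move=> + HH; case: HH => [[G0 G1] GD TD [T0 T1] GL _] .
elim: t => [c|g xs|i IHi j IHj|i IHi j IHj|ys i IHi] /=.
- by case=> ->; split.
- move=> _ sub; split; last by [].
  by apply: GL; apply: sub; rewrite mem_head.
- move=> [_ [hi hj]] sub.
  have [gi ti] : G (teval s F i) /\ T (teval s F i) = teval s (TF T F) i.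
    by apply: IHi => // x hx; apply: sub; rewrite mem_cat hx.
  have [gj tj] : G (teval s F j) /\ T (teval s F j) = teval s (TF T F) j.
    by apply: IHj => // x hx; apply: sub; rewrite mem_cat hx orbT.
  by split; [exact: GD | rewrite TD // ti tj].
- by case.
- by case.
Qed.

Lemma mainT (A : finType) (rels : nat -> seq A -> bool) psi :
  ESO_le_plus_01 psi -> forall s F, esat rels s F psi ->
  exists L, forall T G, Hyp T G L -> esat rels s (TF T F) psi.
Proof.
rewrite /ESO_le_plus_01 -/fO -/fC.
elim: psi => [x y|x y|e i j|e i j|r xs|r xs|p IHp q IHq|p IHp q IHq|x p IHp|x p IHp|g k p IHp]
  /= Hf s F.
- by move=> H; exists [::].
- by move=> H; exists [::].
- case: Hf => -> [hi hj] /= H.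
  exists (teval s F i :: teval s F j :: tvals s F i ++ tvals s F j) => T G HH.
  have HHi : Hyp T G (tvals s F i).
    by apply: (Hyp_sub HH) => x hx; rewrite !inE mem_cat hx !orbT.
  have HHj : Hyp T G (tvals s F j).
    by apply: (Hyp_sub HH) => x hx; rewrite !inE mem_cat hx !orbT.
  have [_ <-] := tevalT hi HHi (fun x hx => hx).
  have [_ <-] := tevalT hj HHj (fun x hx => hx).
  case: HH => _ _ _ _ _ mono.
  move: H; rewrite le_eqVlt => /orP[/eqP ->//|lt].
  by apply/ltW/mono => //; rewrite !inE eqxx ?orbT.
- case: Hf => -> [hi hj] /= H.
  exists (teval s F i :: teval s F j :: tvals s F i ++ tvals s F j) => T G HH.
  have HHi : Hyp T G (tvals s F i).
    by apply: (Hyp_sub HH) => x hx; rewrite !inE mem_cat hx !orbT.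
  have HHj : Hyp T G (tvals s F j).
    by apply: (Hyp_sub HH) => x hx; rewrite !inE mem_cat hx !orbT.
  have [_ <-] := tevalT hi HHi (fun x hx => hx).
  have [_ <-] := tevalT hj HHj (fun x hx => hx).
  case: HH => _ _ _ _ _ mono.
  have lt : teval s F j < teval s F i by rewrite ltNge; apply/negP.
  have hi' : teval s F i \in teval s F i :: teval s F j :: tvals s F i ++ tvals s F j.
    by rewrite mem_head.
  have hj' : teval s F j \in teval s F i :: teval s F j :: tvals s F i ++ tvals s F j.
    by rewrite !inE eqxx orbT.
  move=> Hle; have := mono _ _ hj' hi' lt; by rewrite ltNge Hle.
- by move=> H; exists [::].
- by move=> H; exists [::].
- case: Hf => hp hq [Hp Hq].
  have [L1 H1] := IHp hp _ _ Hp; have [L2 H2] := IHq hq _ _ Hq.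
  exists (L1 ++ L2) => T G HH; split.
    by apply: H1; apply: (Hyp_sub HH) => z hz; rewrite mem_cat hz.
  by apply: H2; apply: (Hyp_sub HH) => z hz; rewrite mem_cat hz orbT.
- case: Hf => hp hq [Hp|Hq].
    have [L1 H1] := IHp hp _ _ Hp.
    exists L1 => T G HH /=; apply: or_introl; exact: (H1 T G HH).
  have [L1 H1] := IHq hq _ _ Hq.
  exists L1 => T G HH /=; apply: or_intror; exact: (H1 T G HH).
- case=> a Ha; have [L1 H1] := IHp Hf _ _ Ha.
  exists L1 => T G HH /=; exists a; exact: (H1 T G HH).
- move=> Ha.
  have [Lf HLf] := fin_all_exists (fun a => IHp Hf _ _ (Ha a)).
  exists (flatten [seq Lf a | a <- enum A]) => T G HH a.
  apply: HLf; apply: (Hyp_sub HH) => z hz.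
  by apply/flattenP; exists (Lf a) => //; apply/mapP; exists a; rewrite ?mem_enum.
- case=> h Hh; have [L1 H1] := IHp Hf _ _ Hh.
  exists L1 => T G HH; exists (fun a => T (h a)).
  have -> : upd1 (TF T F) g (fun a => T (h a)) = TF T (upd1 F g h).
    apply: functional_extensionality => g'; apply: functional_extensionality => a.
    by rewrite /TF /upd1; case: (g' == g).
  exact: (H1 T G HH).
Qed.

Lemma teval_indep (A : finType) bv fa (s s' : nat -> A) F t :
  wf_term bv fa t -> term_in fO fC t -> (forall v, v \in bv -> s v = s' v) ->
  teval s F t = teval s' F t.
Proof.
move=> + + ag; elim: t => [c|g xs|i IHi j IHj|i IHi j IHj|ys i IHi] //=.
- move=> /andP[/allP hx _] _; congr (F g _); apply/eq_in_map => v hv.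
  exact: ag (hx v hv).
- by move=> /andP[wi wj] [_ [hi hj]]; rewrite IHi // IHj.
- by move=> _ [].
- by move=> _ [].
Qed.

Lemma esat_indep (A : finType) (rels : nat -> seq A -> bool) tau psi :
  ESO_le_plus_01 psi -> forall bv fa s s' F, wf_eso_rec tau bv fa psi ->
  (forall v, v \in bv -> s v = s' v) -> esat rels s F psi -> esat rels s' F psi.
Proof.
rewrite /ESO_le_plus_01 -/fO -/fC.
elim: psi => [x y|x y|e i j|e i j|r xs|r xs|p IHp q IHq|p IHp q IHq|x p IHp|x p IHp|g k p IHp]
  /= Hf bv fa s s' F wf ag.
- by case/andP: wf => hx hy; rewrite -!ag.
- by case/andP: wf => hx hy; rewrite -!ag.
- case: Hf => _ [hi hj]; case/andP: wf => wi wj.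
  by rewrite -(teval_indep F wi hi ag) -(teval_indep F wj hj ag).
- case: Hf => _ [hi hj]; case/andP: wf => wi wj.
  by rewrite -(teval_indep F wi hi ag) -(teval_indep F wj hj ag).
- case/andP: wf => /allP hx _.
  by have -> : [seq s' v | v <- xs] = [seq s v | v <- xs] by apply/eq_in_map => v hv; rewrite ag // hx.
- case/andP: wf => /allP hx _.
  by have -> : [seq s' v | v <- xs] = [seq s v | v <- xs] by apply/eq_in_map => v hv; rewrite ag // hx.
- case: Hf => hp hq; case/andP: wf => wp wq [Hp Hq].
  by split; [exact: IHp hp _ _ _ _ _ wp ag Hp | exact: IHq hq _ _ _ _ _ wq ag Hq].
- case: Hf => hp hq; case/andP: wf => wp wq [Hp|Hq].
  by left; exact: IHp hp _ _ _ _ _ wp ag Hp.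
  by right; exact: IHq hq _ _ _ _ _ wq ag Hq.
- case=> a Ha; exists a; apply: IHp Hf _ _ _ _ _ wf _ Ha.
  by move=> v; rewrite inE /upd1 => /orP[->//|hv]; case: (v == x) => //; apply: ag.
- move=> Ha a; apply: IHp Hf _ _ _ _ _ wf _ (Ha a).
  by move=> v; rewrite inE /upd1 => /orP[->//|hv]; case: (v == x) => //; apply: ag.
- case=> h Hh; exists h; exact: IHp Hf _ _ _ _ _ wf ag Hh.
Qed.

Definition x0 : 'I_2 := @Ordinal 2 0 isT.
Definition x1 : 'I_2 := @Ordinal 2 1 isT.
Definition phi : foi 2 := FInd [:: x0] [:: x1].

Lemma ord2E (v : 'I_2) : v = x0 \/ v = x1.
Proof. by case: v => [[|[|]]] // ?; [left|right]; apply/val_inj. Qed.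

Lemma fvs_phi : fvs phi = [:: x0; x1].
Proof.
rewrite /fvs.
have -> : [seq v <- enum 'I_2 | v \in fv phi] = enum 'I_2.
  apply/all_filterP/allP => v _; rewrite /= inE.
  by case: (ord2E v) => ->; rewrite !inE eqxx ?orbT.
by apply: (inj_map val_inj); rewrite val_enum_ord.
Qed.

Definition st (t : seq bool) : asg 2 bool := [ffun v : 'I_2 => Some (nth false t v)].


Lemma cond_eq (t : 2.-tuple bool) (s : asg 2 bool) :
  (vals s [:: x0; x1] == map Some (tval t)) && dom_ok [set v in [:: x0; x1]] s = (s == st t).
Proof.
case: t => [[|a [|b [|]]] //= tt].
apply/idP/idP.
- move=> /andP[/eqP [h0 h1] _]; apply/eqP/ffunP => v; rewrite ffunE.
  by case: (ord2E v) => ->.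
- move=> /eqP ->; apply/andP; split.
    by rewrite /vals /= !ffunE.
  apply/forallP => v; rewrite ffunE /= inE.
  by case: (ord2E v) => ->; rewrite !inE eqxx ?orbT.
Qed.

Lemma sum_tuple2 n (E : n = 2%N) (h : seq bool -> R) :
  \sum_(t : n.-tuple bool) h t =
  h [:: true; true] + h [:: true; false] + h [:: false; true] + h [:: false; false].
Proof.
subst n.
rewrite (reindex (fun p : bool * bool => [tuple p.1; p.2])) /=; last first.
  exists (fun t : 2.-tuple bool => (thead t, tnth t (@Ordinal 2 1 isT))).
    by case=> a b.
  move=> t _; case: t => [[|a [|b [|]]] //= tt]; apply: val_inj => /=.
  by [].
rewrite -(pair_big xpredT xpredT (fun a b => h [:: a; b])) /= !big_bool /=.
by rewrite addrA.
Qed.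

Lemma mass_team xs (E : xs = [:: x0; x1]) (fA : (size xs).-tuple bool -> R)
  (P : pred (asg 2 bool)) :
  mass (team_of fA) P = \sum_(t : (size xs).-tuple bool) fA t * (P (st t))%:R.
Proof.
subst xs.
have tE : forall s, team_of fA s = \sum_(t : 2.-tuple bool) (s == st t)%:R * fA t.
  move=> s; rewrite /team_of big_mkcond; apply: eq_bigr => t _.
  by rewrite cond_eq; case: (s == st t); rewrite ?mul1r ?mul0r.
rewrite /mass big_mkcond /=.
have hE : forall s, (if P s then team_of fA s else 0) =
    \sum_(t : 2.-tuple bool) (P s)%:R * ((s == st t)%:R * fA t).
  by move=> s; rewrite tE -big_distrr; case: (P s) => /=; rewrite ?mul1r ?mul0r.
under eq_bigr => s _ do rewrite hE.
rewrite exchange_big /=; apply: eq_bigr => t _.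
rewrite (bigD1 (st t)) //= eqxx big1 ?addr0; first by rewrite mul1r mulrC.
by move=> s /negbTE ->; rewrite mul0r mulr0.
Qed.

Definition mf (m : bool -> R) (t : seq bool) := m (nth false t 0) * m (nth false t 1).

Lemma size_fvs : size (fvs phi) = 2%N.
Proof. by rewrite fvs_phi. Qed.

Lemma mass_team2 (h : seq bool -> R) (P : pred (asg 2 bool)) :
  mass (team_of (xs:=fvs phi) (fun t => h t)) P =
  h [:: true; true] * (P (st [:: true; true]))%:R +
  h [:: true; false] * (P (st [:: true; false]))%:R +
  h [:: false; true] * (P (st [:: false; true]))%:R +
  h [:: false; false] * (P (st [:: false; false]))%:R.
Proof.
rewrite (mass_team fvs_phi).
exact: (sum_tuple2 size_fvs (fun t => h t * (P (st t))%:R)).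
Qed.

Lemma ind_holds (rels : nat -> seq bool -> bool) D (m : bool -> R) :
  fsat rels D (team_of (xs:=fvs phi) (fun t => mf m t)) phi.
Proof.
move=> /= b c.
case: b => [|b0 []] //; case: c => [|c0 []] // _ _.
rewrite !mass_team2.
rewrite /st /vals /mf /= !ffunE /=.
case: b0; case: c0 => /=; ring.
Qed.

Lemma ind_fails (rels : nat -> seq bool -> bool) D (h : seq bool -> R) :
  fsat rels D (team_of (xs:=fvs phi) (fun t => h t)) phi ->
  (h [:: true; true] + h [:: true; false]) * (h [:: true; true] + h [:: false; true])
  = h [:: true; true] * (h [:: true; true] + h [:: true; false] + h [:: false; true] + h [:: false; false]).
Proof.
move=> /= /(_ [:: true] [:: true] erefl erefl).
rewrite !mass_team2.
rewrite /st /vals /= !ffunE /=.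
by move=> H; move: H; rewrite !mulr1 !mulr0 !addr0.
Qed.


Definition r : R := u / 2.
Definition m (b : bool) : R := if b then r else 1 - r.

Lemma r_bounds : 0 < r /\ r < 1.
Proof.
have := u2; have := u_gt0; rewrite /r => h1 h2.
have hu : u < 2 by nra.
split; lra.
Qed.

Lemma ratr_half : ratr (2^-1 : rat) = (2^-1 : R).
Proof. by rewrite fmorphV /= -[2%R]/(2%:R) rmorph_nat. Qed.

Theorem mainTheorem18 :
  exists (tau : vocab) (N : nat) (phi : foi N),
    wf_fo tau phi /\
    forall psi : eso,
      wf_eso tau (size (fvs phi)) psi -> ESO_le_plus_01 psi ->
      ~ (forall (A : finType) (rels : nat -> seq A -> bool)
                (fA : (size (fvs phi)).-tuple A -> R),
           (1 < #|A|)%N -> d01 fA ->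
           (struc_fo rels phi fA <-> struc_eso rels fA psi)).
Proof.
exists [::], 2%N, phi; split; first by [].
move=> psi Hwf Hfrag H.
have [r0 r1] := r_bounds.
pose fA := fun t : (size (fvs phi)).-tuple bool => mf m t.
have m0 : forall b, 0 <= m b by case; rewrite /m; lra.
have d01A : d01 fA.
  split; first by move=> t; rewrite /fA /mf; apply: mulr_ge0.
  rewrite (sum_tuple2 size_fvs (fun t => mf m t)) /mf /m /=; ring.
have Hcard : (1 < #|{: bool}|)%N by rewrite card_bool.
have HA := H (bool : finType) (fun _ _ => false) fA Hcard d01A.
have Sfo : struc_fo (fun _ _ => false) phi fA by apply: ind_holds.
have E0 := (proj1 HA Sfo) (fun _ => true).
have [L HL] := mainT Hfrag E0.
pose V := [:: 0; r * r; r * (1 - r); (1 - r) * r; (1 - r) * (1 - r)].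
have [S [lam [I [l1 [Su [lu HS]]]]]] := lam_exists (L ++ V).
have [e [e0 He]] := eps_exists lam (L ++ V).
pose T x := x + e * lam x.
have T0 : T 0 = 0 by rewrite /T (lam0 I) mulr0 addr0.
have TD : forall x y, S x -> S y -> T (x + y) = T x + T y.
  by move=> x y hx hy; rewrite /T (lD I hx hy); ring.
have HT : Hyp T S L.
  split.
  - by split; [exact: (S0 I) | exact: (S1 I)].
  - by move=> x y hx hy; exact: (SD I hx hy).
  - exact: TD.
  - by split => //; rewrite /T l1 mulr0 addr0.
  - by move=> x hx; apply: HS; rewrite mem_cat hx.
  - by move=> x y hx hy; apply: He; rewrite mem_cat ?hx ?hy.
have E1 := HL T S HT.
pose fA' := fun t : (size (fvs phi)).-tuple bool => T (fA t).
have EF : TF T (fenv0 fA) = fenv0 fA'.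
  apply: functional_extensionality => g; apply: functional_extensionality => a.
  rewrite /TF /fenv0; case: (g == 0%N) => //; case: (insub a) => //.
have Seso' : struc_eso (fun _ _ => false) fA' psi.
  move=> s.
  have E1' : esat (fun _ _ => false) (fun _ => true) (fenv0 fA') psi by rewrite -EF.
  have ag : forall v : nat, v \in [::] -> (fun _ => true) v = s v by [].
  exact: (esat_indep Hfrag Hwf ag E1').
have inV : forall x, x \in V -> x \in L ++ V by move=> x hx; rewrite mem_cat hx orbT.
have fAV : forall t, fA t \in V.
  move=> t; rewrite /fA /mf /m.
  by case: (nth false t 0); case: (nth false t 1); rewrite !inE eqxx ?orbT.
have SV : forall x, x \in V -> S x by move=> x hx; apply: HS; apply: inV.
have Sa : S (r * r) by apply: SV; rewrite !inE eqxx ?orbT.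
have Sb : S (r * (1 - r)) by apply: SV; rewrite !inE eqxx ?orbT.
have Sc : S ((1 - r) * r) by apply: SV; rewrite !inE eqxx ?orbT.
have Sd : S ((1 - r) * (1 - r)) by apply: SV; rewrite !inE eqxx ?orbT.
have Sab := SD I Sa Sb.
have Sabc := SD I Sab Sc.
have d01' : d01 fA'.
  split.
    move=> t; rewrite /fA'.
    have := proj1 d01A t; rewrite le_eqVlt => /orP[/eqP <-|lt]; first by rewrite T0.
    rewrite -T0; apply/ltW/He => //; apply: inV; [by rewrite mem_head | exact: fAV].
  rewrite /fA' /fA (sum_tuple2 size_fvs (fun t => T (mf m t))) /mf /m /=.
  rewrite -(TD _ _ Sa Sb) -(TD _ _ Sab Sc) -(TD _ _ Sabc Sd).
  have -> : r * r + r * (1 - r) + (1 - r) * r + (1 - r) * (1 - r) = 1 by ring.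
  by rewrite /T l1 mulr0 addr0.
have Sfo' := proj2 (H (bool : finType) (fun _ _ => false) fA' Hcard d01') Seso'.
have := @ind_fails (fun _ _ => false) [set v in fvs phi] (fun t => T (mf m t)) Sfo'.
rewrite /mf /m /=.
rewrite -(TD _ _ Sa Sb) -(TD _ _ Sab Sc) -(TD _ _ Sabc Sd) -(TD _ _ Sa Sc).
have -> : r * r + r * (1 - r) + (1 - r) * r + (1 - r) * (1 - r) = 1 by ring.
have -> : r * r + r * (1 - r) = r by ring.
have -> : r * r + (1 - r) * r = r by ring.
have rE : r = ratr (2^-1 : rat) * u by rewrite ratr_half /r mulrC.
have rrE : r * r = ratr (2^-1 : rat) * 1.
  rewrite ratr_half mulr1 /r.
  by rewrite mulrACA u2; field.
have Tr : T r = r + e / 2.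
  by rewrite /T {2}rE (lZ I _ Su) lu mulr1 ratr_half.
have Trr : T (r * r) = r * r.
  by rewrite /T rrE (lZ I _ (S1 I)) l1 mulr0 mulr0 addr0.
have T1 : T 1 = 1 by rewrite /T l1 mulr0 addr0.
rewrite Tr Trr T1 mulr1 => Heq.
have := u2; have := u_gt0; rewrite /r in Heq.
move: Heq; rewrite /r => Heq h1 h2.
nra.
Qed.
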